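(* Let $\Omega^\delta$ be a hedgehog domain and, for a black square $u$ and a white square $v$ of $\Omega^\delta$ sharing a side, let $\mathbb{P}[u,v]$ be the probability that the domino $\{u,v\}$ belongs to a uniformly random domino tiling of $\Omega^\delta$. Then for every white square $a$ of $\Omega^\delta$ having no side on $\partial\Omega^\delta$, $$\mathbb{P}[a-\delta\lambda,a]+\mathbb{P}[a-\delta\bar\lambda,a]=\mathbb{P}[a+\delta\lambda,a]+\mathbb{P}[a+\delta\bar\lambda,a]=\tfrac12,$$ and for every black square $a$ of $\Omega^\delta$ having no side on $\partial\Omega^\delta$, $$\mathbb{P}[a,a+\delta\lambda]+\mathbb{P}[a,a-\delta\bar\lambda]=\mathbb{P}[a,a-\delta\lambda]+\mathbb{P}[a,a+\delta\bar\lambda]=\tfrac12 .$$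
   Context: Lattice: fix $\delta>0$, $\lambda=e^{i\pi/4}$, and write $[p,q]:=\delta p/\sqrt2+i\delta q/\sqrt2$ for integers $p,q$. The plane is tiled by closed squares of side $\delta$ centred at $[n,m]$ with $n+m$ even (sides parallel to $\lambda,\bar\lambda$); squares are identified with their centres, and the square $a$ shares a side exactly with the squares $a\pm\delta\lambda$, $a\pm\delta\bar\lambda$. The square $[n,m]$ is black if $n,m$ are even and white if they are odd. Vertices are the points $[p,q]$ with $p+q$ odd; $[p,q]$ is a $\circ$-vertex if $p$ is odd and $p+q\equiv 1\pmod 4$. Hedgehog domain: a $2\delta$-square is a closed square of side $2\delta$ whose four corners are $\circ$-vertices (a union of four tiling squares). A hedgehog domain $\Omega^\delta$ is the interior of a finite union of $2\delta$-squares, connected and simply connected, such that each of these $2\delta$-squares has either none of its sides, or exactly two sides sharing a common corner, contained in $\partial\Omega^\delta$; it is identified with the set of tiling squares it contains. A domino tiling is a partition of these squares into pairs of squares sharing a side. *)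

(* Defs.v *)
From HB Require Import structures.
From mathcomp Require Import all_boot all_order all_algebra.
From mathcomp Require Import finmap.
Set Implicit Arguments. Unset Strict Implicit. Unset Printing Implicit Defensive.
Import Order.TTheory GRing.Theory Num.Theory.
Local Open Scope fset_scope.
Local Open Scope ring_scope.

(* Coordinates: the point [p,q] = delta*p/sqrt2 + i*delta*q/sqrt2 is encoded
   by the pair (p,q) : int * int.  In these coordinates delta*lambda = [1,1]
   and delta*conj(lambda) = [1,-1]. *)
Definition pt := (int * int)%type.

Definition padd (x y : pt) : pt := ((fst x) + (fst y), (snd x) + (snd y)).
Definition popp (x : pt) : pt := (- (fst x), - (snd x)).
Definition psub (x y : pt) : pt := padd x (popp y).

Definition dlam : pt := (1, 1).
Definition dlamb : pt := (1, -1).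

(* Tiling squares are identified with their centres [n,m], n+m even. *)
Definition is_square (s : pt) : bool := (((fst s) + (snd s)) %% 2)%Z == 0.
Definition is_black (s : pt) : bool := (((fst s) %% 2)%Z == 0) && (((snd s) %% 2)%Z == 0).
Definition is_white (s : pt) : bool := (((fst s) %% 2)%Z == 1) && (((snd s) %% 2)%Z == 1).

Definition share_side (s t : pt) : bool :=
  psub t s \in [:: dlam; popp dlam; dlamb; popp dlamb].

(* Vertices [p,q], p+q odd; circ-vertices: p odd and p+q = 1 mod 4. *)
Definition is_circ_vertex (v : pt) : bool :=
  (((fst v) %% 2)%Z == 1) && ((((fst v) + (snd v)) %% 4)%Z == 1).

(* A 2delta-square is encoded by its centre w (a vertex of the tiling).
   Its corners are w +- (2,0), w +- (0,2); it is the union of the four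
   tiling squares w +- (1,0), w +- (0,1). *)
Definition big_corners (w : pt) : seq pt :=
  [:: padd w (2,0); psub w (2,0); padd w (0,2); psub w (0,2)].
Definition is_big (w : pt) : bool :=
  ((((fst w) + (snd w)) %% 2)%Z == 1) && all is_circ_vertex (big_corners w).
Definition big_cells (w : pt) : seq pt :=
  [:: padd w (1,0); psub w (1,0); padd w (0,1); psub w (0,1)].

(* The 2delta-squares sharing a side with w: w +- 2 delta lambda, w +- 2 delta conj(lambda). *)
Definition big_side_dirs : seq pt := [:: (2,2); (-2,-2); (2,-2); (-2,2)].
(* 2delta-squares sharing a side or a corner with w *)
Definition big_touch_dirs : seq pt := big_side_dirs ++ [:: (4,0); (-4,0); (0,4); (0,-4)].

Definition in_step (H : {fset pt}) (x y : pt) : bool :=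
  (psub y x \in big_side_dirs) && (y \in H).
Definition out_step (H : {fset pt}) (x y : pt) : bool :=
  (psub y x \in big_touch_dirs) && is_big y && (y \notin H).

(* Side d of the 2delta-square w lies on the boundary of the domain iff the
   2delta-square across that side is not in H. *)
Definition side_on_bdry (H : {fset pt}) (w d : pt) : bool := padd w d \notin H.

(* Boundary condition: none of the sides, or exactly two sides sharing a corner. *)
Definition hedgehog_local (H : {fset pt}) (w : pt) : bool :=
  let b := side_on_bdry H w in
  let L := (2,2) : pt in let Lb := (2,-2) : pt in
  [|| ~~ b L && ~~ b (popp L) && ~~ b Lb && ~~ b (popp Lb),
      b L && b Lb && ~~ b (popp L) && ~~ b (popp Lb),
      b Lb && b (popp L) && ~~ b L && ~~ b (popp Lb),
      b (popp L) && b (popp Lb) && ~~ b L && ~~ b Lb |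
      b (popp Lb) && b L && ~~ b (popp L) && ~~ b Lb].

(* H : finite set of 2delta-squares whose union has hedgehog interior. *)
Definition hedgehog (H : {fset pt}) : Prop :=
  [/\ (forall w, w \in H -> is_big w),
      (* interior connected: side-adjacency connectivity *)
      (forall w1 w2, w1 \in H -> w2 \in H ->
         exists s : seq pt, path (in_step H) w1 s && (last w1 s == w2)),
      (* interior simply connected: the complement (union of the closed
         2delta-squares not in H) has no bounded connected component *)
      (forall w, is_big w -> w \notin H -> forall N : nat,
         exists s : seq pt, path (out_step H) w s &&
                            ((N%:Z <= `|(last w s).1|) || (N%:Z <= `|(last w s).2|))) &
      (forall w, w \in H -> hedgehog_local H w)].

Definition dom_cells (H : {fset pt}) : {fset pt} :=
  \bigcup_(w <- H) [fset c | c in big_cells w].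

Definition dominoes (H : {fset pt}) : {fset pt * pt} :=
  [fset bw in dom_cells H `*` dom_cells H |
     is_black (fst bw) && is_white (snd bw) && share_side (fst bw) (snd bw)].

Definition is_tiling (H : {fset pt}) (T : {fset pt * pt}) : bool :=
  (T `<=` dominoes H) &&
  [forall c : dom_cells H,
     #|` [fset d in T | ((fst d) == val c) || ((snd d) == val c)]| == 1%N].

Definition tilings (H : {fset pt}) : {fset {fset pt * pt}} :=
  [fset T in fpowerset (dominoes H) | is_tiling H T].

Definition dprob (H : {fset pt}) (u v : pt) : rat :=
  (#|` [fset T in tilings H | (u, v) \in T]|)%:R / (#|` tilings H|)%:R.

Definition interior_square (H : {fset pt}) (a : pt) : bool :=
  (a \in dom_cells H) &&
  all (fun d => padd a d \in dom_cells H) [:: dlam; popp dlam; dlamb; popp dlamb].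

(* Main.v *)
Require Import Defs.
From HB Require Import structures.
From mathcomp Require Import all_boot all_order all_algebra.
From mathcomp Require Import finmap.
From mathcomp Require Import zify.
Import Order.TTheory GRing.Theory Num.Theory.
Local Open Scope fset_scope.
Local Open Scope ring_scope.

(* Every tiling is encoded vertex-by-vertex: a domino is determined by the odd
   lattice vertex in the middle of its long side ("ov") and two booleans.
   Each cell "picks" one of its two odd corners (the one at which its domino
   sits).  The complementary picking is again realised by tilings (Tc), the
   class of tilings with a given picking has 2^(#sinks) elements (flip), and
   for hedgehog domains #sinks = #sources (double counting, using the
   boundary condition).  A double counting argument then shows that a cell
   picks each of its corners in exactly half of the tilings. *)

Definition b1 (v : pt) : pt := (v.1, v.2 + 1).
Definition b2 (v : pt) : pt := (v.1, v.2 - 1).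
Definition w1 (v : pt) : pt := (v.1 + 1, v.2).
Definition w2 (v : pt) : pt := (v.1 - 1, v.2).
Definition bx (v : pt) (x : bool) := if x then b1 v else b2 v.
Definition wy (v : pt) (y : bool) := if y then w1 v else w2 v.
Definition dom (v : pt) (x y : bool) : pt * pt := (bx v x, wy v y).
Definition ov (d : pt * pt) : pt := (d.1.1, d.2.2).
Definition xb (d : pt * pt) : bool := d.1.2 == d.2.2 + 1.
Definition yb (d : pt * pt) : bool := d.2.1 == d.1.1 + 1.
Definition oddv (v : pt) : bool := ((v.1 %% 2)%Z == 0) && ((v.2 %% 2)%Z == 1).
Definition Aint (v : pt) : bool := ((v.1 + v.2) %% 4)%Z == 1.
Definition blk (c : pt) : pt :=
  if ((c.1 %% 2)%Z == 0) then
    (if ((c.1 + c.2 - 1) %% 4)%Z == 3 then (c.1 - 1, c.2) else (c.1 + 1, c.2))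
  else (if ((c.1 + c.2 - 1) %% 4)%Z == 3 then (c.1, c.2 - 1) else (c.1, c.2 + 1)).

Lemma is_big_char (w : pt) :
  is_big w = (((w.1 %% 2)%Z == 1) && (((w.1 + w.2) %% 4)%Z == 3)).
Proof. rewrite /is_big /big_corners /is_circ_vertex /=; case: w => a b /=; lia. Qed.

Lemma big_cellsP (w c : pt) : is_big w -> c \in big_cells w ->
  (is_black c || is_white c) && (blk c == w).
Proof.
rewrite is_big_char /big_cells /blk /is_black /is_white.
case: w c => [a b] [c d] /=; rewrite !inE /= !xpair_eqE.
by case: ifP; case: ifP; rewrite /= ?xpair_eqE; lia.
Qed.

Lemma blk_cells (c : pt) : is_black c || is_white c ->
  is_big (blk c) && (c \in big_cells (blk c)).
Proof.
rewrite is_big_char /big_cells /blk /is_black /is_white.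
case: c => [c d] /=.
case: ifP; case: ifP; rewrite /= !inE /= ?xpair_eqE /padd /psub /popp /=.
rewrite ?oppr0 ?addr0 ?subr0.
- lia.
- lia.
- lia.
- lia.
Qed.

Section Geo.
Variable H : {fset pt}.
Hypothesis Hbig : forall w, w \in H -> is_big w.
Local Notation C := (dom_cells H).

Lemma memC c : (c \in C) = (is_black c || is_white c) && (blk c \in H).
Proof.
apply/bigfcupP/idP.
  move=> [w /andP[wH _]]; rewrite in_fset => cw.
  by case/andP: (@big_cellsP w c (Hbig _ wH) cw) => -> /eqP ->.
case/andP=> col bH; exists (blk c); first by rewrite bH.
by rewrite in_fset; case/andP: (@blk_cells c col).
Qed.

Lemma blk_pair v x : oddv v ->
  blk (bx v x) = blk (wy v (if Aint v then x else ~~ x)).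
Proof.
rewrite /oddv /Aint /bx /wy /blk /b1 /b2 /w1 /w2.
case: v => [p q] /= hv.
case: x; case: ifP => /= hA; repeat case: ifP => /=; move=> *; apply/eqP;
  rewrite ?xpair_eqE; lia.
Qed.

Lemma col_b v x : oddv v -> is_black (bx v x).
Proof. by rewrite /oddv /is_black /bx /b1 /b2; case: v => p q; case: x => /=; lia. Qed.
Lemma col_w v y : oddv v -> is_white (wy v y).
Proof. by rewrite /oddv /is_white /wy /w1 /w2; case: v => p q; case: y => /=; lia. Qed.

Lemma pairC v x : oddv v ->
  (bx v x \in C) = (wy v (if Aint v then x else ~~ x) \in C).
Proof.
move=> hv; rewrite !memC (@blk_pair v x hv) col_b // col_w //.
by rewrite orbT.
Qed.

Local Notation D := (dominoes H).

Definition darith (d : pt * pt) : bool :=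
  [&& ((d.1.1 %% 2)%Z == 0), ((d.1.2 %% 2)%Z == 0), ((d.2.1 %% 2)%Z == 1),
      ((d.2.2 %% 2)%Z == 1), ((d.2.1 - d.1.1 == 1) || (d.2.1 - d.1.1 == -1)) &
      ((d.2.2 - d.1.2 == 1) || (d.2.2 - d.1.2 == -1))].

Lemma inD d : (d \in D) = [&& d.1 \in C, d.2 \in C & darith d].
Proof.
rewrite /dominoes !inE /= /is_black /is_white /share_side /darith /psub /padd /popp /dlam /dlamb.
case: d => [[a b] [e f]] /=; rewrite !inE /= !xpair_eqE ?oppr0 ?addr0 ?subr0.
case: (_ \in C); case: (_ \in C) => //=. lia.
Qed.


Lemma ov_dom v x y : ov (dom v x y) = v.
Proof. by case: v x y => p q [] []. Qed.
Lemma xb_dom v x y : xb (dom v x y) = x.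
Proof. by case: v x y => p q [] [] /=; rewrite /xb /= /b1 /b2 /=; lia. Qed.
Lemma yb_dom v x y : yb (dom v x y) = y.
Proof. by case: v x y => p q [] [] /=; rewrite /yb /= /w1 /w2 /=; lia. Qed.
Lemma darith_dom v x y : oddv v -> darith (dom v x y).
Proof. by case: v x y => p q [] []; rewrite /oddv /darith /= /b1 /b2 /w1 /w2 /=; lia. Qed.
Lemma D_decomp d : darith d -> oddv (ov d) && (d == dom (ov d) (xb d) (yb d)).
Proof.
case: d => [[a b] [e f]]; rewrite /darith /oddv /ov /xb /yb /dom /bx /wy /b1 /b2 /w1 /w2 /=.
by case: ifP; case: ifP; rewrite /= !xpair_eqE; lia.
Qed.
Lemma dom_inD v x y : oddv v -> (dom v x y \in D) = (bx v x \in C) && (wy v y \in C).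
Proof. by move=> hv; rewrite inD darith_dom // andbT. Qed.

Definition cnt (X : {fset pt * pt}) v x y : nat := (dom v x y \in X).
Definition vdn (c : pt) : pt := (c.1, c.2 - 1).
Definition vup (c : pt) : pt := (c.1, c.2 + 1).
Definition vlf (c : pt) : pt := (c.1 - 1, c.2).
Definition vrt (c : pt) : pt := (c.1 + 1, c.2).
Definition doms (c : pt) : seq (pt * pt) :=
  if ((c.1 %% 2)%Z == 0) then
    [:: dom (vdn c) true true; dom (vdn c) true false; dom (vup c) false true; dom (vup c) false false]
  else [:: dom (vlf c) true true; dom (vlf c) false true; dom (vrt c) true false; dom (vrt c) false false].
Definition cov (X : {fset pt * pt}) c : nat := count (mem X) (doms c).

Lemma cov_card (X : {fset pt * pt}) c : (forall d, d \in X -> darith d) ->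
  (is_black c || is_white c) ->
  #|` [fset d in X | (d.1 == c) || (d.2 == c)]| = cov X c.
Proof.
move=> HX col.
have E : [fset d in X | (d.1 == c) || (d.2 == c)] = [fset d in [seq d <- doms c | d \in X]].
  apply/fsetP => d; rewrite !inE mem_filter.
  case dX: (d \in X); rewrite ?andbF ?andbT //=.
  move: (HX _ dX) => /D_decomp /andP[hv /eqP ->].
  move: (ov d) (xb d) (yb d) hv col => [p q] x y; case: c => [c1 c2].
  rewrite /oddv /doms /is_black /is_white /dom /bx /wy /b1 /b2 /w1 /w2 /vdn /vup /vlf /vrt /=.
  (by case hc: ((c1 %% 2)%Z == 0); case: x; case: y; rewrite /= !inE /= !xpair_eqE; lia).
rewrite E card_fseq undup_id ?size_filter //.
apply: filter_uniq; clear E; move: col; case: c => [p q].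
rewrite /doms /is_black /is_white /dom /bx /wy /b1 /b2 /w1 /w2 /vdn /vup /vlf /vrt /=.
by case: ifP; rewrite /= !inE /= !xpair_eqE; lia.
Qed.

End Geo.

Lemma vdn_b1 v : vdn (b1 v) = v.
Proof. by case: v => p q; rewrite /vdn /b1 /= addrK. Qed.
Lemma vup_b2 v : vup (b2 v) = v.
Proof. by case: v => p q; rewrite /vup /b2 /= subrK. Qed.
Lemma vlf_w1 v : vlf (w1 v) = v.
Proof. by case: v => p q; rewrite /vlf /w1 /= addrK. Qed.
Lemma vrt_w2 v : vrt (w2 v) = v.
Proof. by case: v => p q; rewrite /vrt /w2 /= subrK. Qed.
Lemma b1_vdn c : b1 (vdn c) = c.
Proof. by case: c => p q; rewrite /vdn /b1 /= subrK. Qed.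
Lemma b2_vup c : b2 (vup c) = c.
Proof. by case: c => p q; rewrite /vup /b2 /= addrK. Qed.
Lemma w1_vlf c : w1 (vlf c) = c.
Proof. by case: c => p q; rewrite /vlf /w1 /= subrK. Qed.
Lemma w2_vrt c : w2 (vrt c) = c.
Proof. by case: c => p q; rewrite /vrt /w2 /= addrK. Qed.

Lemma oddv_vdn c : is_black c -> oddv (vdn c).
Proof. by case: c => p q; rewrite /is_black /oddv /vdn /=; lia. Qed.
Lemma oddv_vup c : is_black c -> oddv (vup c).
Proof. by case: c => p q; rewrite /is_black /oddv /vup /=; lia. Qed.
Lemma oddv_vlf c : is_white c -> oddv (vlf c).
Proof. by case: c => p q; rewrite /is_white /oddv /vlf /=; lia. Qed.
Lemma oddv_vrt c : is_white c -> oddv (vrt c).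
Proof. by case: c => p q; rewrite /is_white /oddv /vrt /=; lia. Qed.
Lemma black_par c : is_black c -> ((c.1 %% 2)%Z == 0).
Proof. by case: c => p q; rewrite /is_black /=; lia. Qed.
Lemma white_par c : is_white c -> ((c.1 %% 2)%Z == 0) = false.
Proof. by case: c => p q; rewrite /is_white /=; lia. Qed.
Lemma black_white c : is_black c -> is_white c = false.
Proof. by case: c => p q; rewrite /is_white /is_black /=; lia. Qed.
Lemma Aint_vdn c : is_black c -> Aint (vdn c) = ~~ Aint (vup c).
Proof. by case: c => p q; rewrite /is_black /Aint /vdn /vup /=; lia. Qed.
Lemma Aint_vlf c : is_white c -> Aint (vlf c) = ~~ Aint (vrt c).
Proof. by case: c => p q; rewrite /is_white /Aint /vlf /vrt /=; lia. Qed.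

Section Til.
Variable H : {fset pt}.
Hypothesis Hbig : forall w, w \in H -> is_big w.
Local Notation C := (dom_cells H).
Local Notation D := (dominoes H).

Lemma colC c : c \in C -> is_black c || is_white c.
Proof. by rewrite (@memC H Hbig c); case/andP. Qed.

Lemma darithD d : d \in D -> darith d.
Proof. by rewrite (inD H); case/and3P. Qed.

Lemma tiling_sub T : is_tiling H T -> T `<=` D.
Proof. by case/andP. Qed.

Lemma tiling_cov T : is_tiling H T -> forall c, c \in C -> cov T c = 1%N.
Proof.
case/andP=> sub /forallP hc c cC.
rewrite -cov_card; first by apply/eqP; exact: (hc [` cC]).
  by move=> d dT; apply: darithD; exact: (fsubsetP sub).
exact: colC.
Qed.

Lemma tilingI T : T `<=` D -> (forall c, c \in C -> cov T c = 1%N) -> is_tiling H T.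
Proof.
move=> sub hc; apply/andP; split=> //; apply/forallP => c.
rewrite cov_card ?hc ?fsvalP //.
  by move=> d dT; apply: darithD; exact: (fsubsetP sub).
exact: colC (fsvalP c).
Qed.

Lemma covE_black (X : {fset pt * pt}) c : is_black c ->
  cov X c = (cnt X (vdn c) true true + cnt X (vdn c) true false +
             cnt X (vup c) false true + cnt X (vup c) false false)%N.
Proof. by move=> hb; rewrite /cov /doms (@black_par c hb) /= /cnt !addnA addn0. Qed.
Lemma covE_white (X : {fset pt * pt}) c : is_white c ->
  cov X c = (cnt X (vlf c) true true + cnt X (vlf c) false true +
             cnt X (vrt c) true false + cnt X (vrt c) false false)%N.
Proof. by move=> hb; rewrite /cov /doms (@white_par c hb) /= /cnt !addnA addn0. Qed.

End Til.

Definition tv (X : {fset pt * pt}) v x y := dom v x y \in X.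
Definition allC (H : {fset pt}) v :=
  [&& b1 v \in dom_cells H, b2 v \in dom_cells H, w1 v \in dom_cells H & w2 v \in dom_cells H].
Definition emptyv H X v := allC H v &&
  ~~ [|| tv X v true true, tv X v true false, tv X v false true | tv X v false false].
Definition fullv H X v := allC H v &&
  ((tv X v true true && tv X v false false) || (tv X v true false && tv X v false true)).
Definition tcb H X v x y :=
  [&& ~~ (tv X v x true || tv X v x false), ~~ (tv X v true y || tv X v false y)
    & (emptyv H X v ==> (x == y))].
Definition Tc H X := [fset d in dominoes H | tcb H X (ov d) (xb d) (yb d)].
Definition flip H (X : {fset pt * pt}) (S : {fset pt}) :=
  [fset d in dominoes H | (d \in X) (+) (ov d \in S)].

Lemma in_sep (K : choiceType) (A : {fset K}) (P : pred K) x :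
  (x \in [fset y in A | P y]) = (x \in A) && P x.
Proof. by rewrite !inE. Qed.

Section Vert.
Variable H : {fset pt}.
Hypothesis Hbig : forall w, w \in H -> is_big w.
Local Notation C := (dom_cells H).
Local Notation D := (dominoes H).

Lemma in_Tc X v x y : oddv v ->
  (dom v x y \in Tc H X) = [&& bx v x \in C, wy v y \in C & tcb H X v x y].
Proof.
move=> hv; rewrite /Tc in_sep dom_inD // ov_dom xb_dom yb_dom.
by rewrite andbA.
Qed.

Lemma in_flip X S v x y : oddv v ->
  (dom v x y \in flip H X S) = [&& bx v x \in C, wy v y \in C & (dom v x y \in X) (+) (v \in S)].
Proof.
move=> hv; rewrite /flip in_sep dom_inD // ov_dom.
by rewrite andbA.
Qed.

Variable T : {fset pt * pt}.
Hypothesis tT : is_tiling H T.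

Lemma t_mem v x y : oddv v -> dom v x y \in T -> (bx v x \in C) && (wy v y \in C).
Proof.
move=> hv dT; rewrite -dom_inD //.
exact: (fsubsetP (@tiling_sub H T tT)).
Qed.

Lemma bnd_b v x : oddv v -> ~~ ((dom v x true \in T) && (dom v x false \in T)).
Proof.
move=> hv; apply/negP => /andP [h1 h2].
have cC : bx v x \in C by case/andP: (t_mem _ _ _ hv h1).
have := @tiling_cov H Hbig T tT _ cC.
case: x h1 h2 cC => h1 h2 cC.
  rewrite covE_black; last exact: (@col_b v true hv).
  by rewrite vdn_b1 /cnt h1 h2.
rewrite covE_black; last exact: (@col_b v false hv).
by rewrite vup_b2 /cnt h1 h2 /=; lia.
Qed.


Lemma bnd_w v y : oddv v -> ~~ ((dom v true y \in T) && (dom v false y \in T)).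
Proof.
move=> hv; apply/negP => /andP [h1 h2].
have cC : wy v y \in C by case/andP: (t_mem _ _ _ hv h1).
have := @tiling_cov H Hbig T tT _ cC.
case: y h1 h2 cC => h1 h2 cC.
  rewrite covE_white; last exact: (@col_w v true hv).
  by rewrite vlf_w1 /cnt h1 h2.
rewrite covE_white; last exact: (@col_w v false hv).
by rewrite vrt_w2 /cnt h1 h2 /=; lia.
Qed.

Lemma LC_b v x : oddv v -> bx v x \in C ->
  (cnt (Tc H T) v x true + cnt (Tc H T) v x false)%N = ~~ (tv T v x true || tv T v x false).
Proof.
move=> hv bC; rewrite /cnt !in_Tc //.
have /eqP p1 := @pairC H Hbig v true hv.
have /eqP p2 := @pairC H Hbig v false hv.
have /implyP m1 := t_mem v true true hv; have /implyP m2 := t_mem v true false hv.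
have /implyP m3 := t_mem v false true hv; have /implyP m4 := t_mem v false false hv.
have n1 := bnd_b v true hv; have n2 := bnd_b v false hv.
have n3 := bnd_w v true hv; have n4 := bnd_w v false hv.
move: bC p1 p2 m1 m2 m3 m4 n1 n2 n3 n4.
rewrite /tcb /emptyv /allC /tv /bx /wy.
by case: x; case: (Aint v) => /=; move: (b1 v \in C) (b2 v \in C) (w1 v \in C) (w2 v \in C) (dom v true true \in T) (dom v true false \in T) (dom v false true \in T) (dom v false false \in T); do 8!case.
Qed.

Lemma LC_w v y : oddv v -> wy v y \in C ->
  (cnt (Tc H T) v true y + cnt (Tc H T) v false y)%N = ~~ (tv T v true y || tv T v false y).
Proof.
move=> hv bC; rewrite /cnt !in_Tc //.
have /eqP p1 := @pairC H Hbig v true hv.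
have /eqP p2 := @pairC H Hbig v false hv.
have /implyP m1 := t_mem v true true hv; have /implyP m2 := t_mem v true false hv.
have /implyP m3 := t_mem v false true hv; have /implyP m4 := t_mem v false false hv.
have n1 := bnd_b v true hv; have n2 := bnd_b v false hv.
have n3 := bnd_w v true hv; have n4 := bnd_w v false hv.
move: bC p1 p2 m1 m2 m3 m4 n1 n2 n3 n4.
rewrite /tcb /emptyv /allC /tv /bx /wy.
by case: y; case: (Aint v) => /=; move: (b1 v \in C) (b2 v \in C) (w1 v \in C) (w2 v \in C) (dom v true true \in T) (dom v true false \in T) (dom v false true \in T) (dom v false false \in T); do 8!case.
Qed.

Lemma full_Tc v : oddv v -> fullv H (Tc H T) v = emptyv H T v.
Proof.
move=> hv; rewrite /fullv /tv !in_Tc //.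
have /implyP m1 := t_mem v true true hv; have /implyP m2 := t_mem v true false hv.
have /implyP m3 := t_mem v false true hv; have /implyP m4 := t_mem v false false hv.
have n1 := bnd_b v true hv; have n2 := bnd_b v false hv.
have n3 := bnd_w v true hv; have n4 := bnd_w v false hv.
move: m1 m2 m3 m4 n1 n2 n3 n4.
rewrite /tcb /emptyv /allC /tv /bx /wy.
move: (b1 v \in C) (b2 v \in C) (w1 v \in C) (w2 v \in C)
  (dom v true true \in T) (dom v true false \in T) (dom v false true \in T) (dom v false false \in T).
by do 8!case.
Qed.

Variable S : {fset pt}.
Hypothesis hS : forall v, v \in S -> fullv H T v.

Lemma LF_b v x : oddv v ->
  (cnt (flip H T S) v x true + cnt (flip H T S) v x false)%N = (cnt T v x true + cnt T v x false)%N.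
Proof.
move=> hv; rewrite /cnt !in_flip //.
have /implyP m1 := t_mem v true true hv; have /implyP m2 := t_mem v true false hv.
have /implyP m3 := t_mem v false true hv; have /implyP m4 := t_mem v false false hv.
have n1 := bnd_b v true hv; have n2 := bnd_b v false hv.
have n3 := bnd_w v true hv; have n4 := bnd_w v false hv.
have /implyP f := hS v.
move: m1 m2 m3 m4 n1 n2 n3 n4 f.
rewrite /fullv /allC /tv /bx /wy.
by case: x => /=; move: (v \in S) (b1 v \in C) (b2 v \in C) (w1 v \in C) (w2 v \in C) (dom v true true \in T) (dom v true false \in T) (dom v false true \in T) (dom v false false \in T); do 9!case.
Qed.

Lemma LF_w v y : oddv v ->
  (cnt (flip H T S) v true y + cnt (flip H T S) v false y)%N = (cnt T v true y + cnt T v false y)%N.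
Proof.
move=> hv; rewrite /cnt !in_flip //.
have /implyP m1 := t_mem v true true hv; have /implyP m2 := t_mem v true false hv.
have /implyP m3 := t_mem v false true hv; have /implyP m4 := t_mem v false false hv.
have n1 := bnd_b v true hv; have n2 := bnd_b v false hv.
have n3 := bnd_w v true hv; have n4 := bnd_w v false hv.
have /implyP f := hS v.
move: m1 m2 m3 m4 n1 n2 n3 n4 f.
rewrite /fullv /allC /tv /bx /wy.
by case: y => /=; move: (v \in S) (b1 v \in C) (b2 v \in C) (w1 v \in C) (w2 v \in C) (dom v true true \in T) (dom v true false \in T) (dom v false true \in T) (dom v false false \in T); do 9!case.
Qed.

End Vert.

Definition pkc (X : {fset pt * pt}) (c : pt) : nat :=
  if ((c.1 %% 2)%Z == 0) then (cnt X (vup c) false true + cnt X (vup c) false false)%N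
  else (cnt X (vlf c) true true + cnt X (vlf c) false true)%N.
Definition pk X c : bool := (pkc X c != 0)%N.
Definition same H X Y := all (fun c => pk X c == pk Y c) (dom_cells H).
Definition Vset H := [fset ov d | d in dominoes H].
Definition sinks H X := [fset v in Vset H | fullv H X v].
Definition sources H X := [fset v in Vset H | emptyv H X v].

Set Implicit Arguments.
Unset Strict Implicit.
Section K.
Variable H : {fset pt}.
Hypothesis Hbig : forall w, w \in H -> is_big w.
Local Notation C := (dom_cells H).
Local Notation D := (dominoes H).

Lemma sepsub (K : choiceType) (A : {fset K}) (P : pred K) : [fset y in A | P y] `<=` A.
Proof. by apply/fsubsetP => x; rewrite in_sep => /andP[]. Qed.

Lemma Vset_odd v : v \in Vset H -> oddv v.
Proof.
case/imfsetP => d /= dD ->.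
by case/andP: (D_decomp _ (darithD _ _ dD)).
Qed.

Lemma D_dom d : d \in D -> exists v x y, [/\ oddv v, d = dom v x y & v \in Vset H].
Proof.
move=> dD; case/andP: (D_decomp _ (darithD _ _ dD)) => hv /eqP E.
exists (ov d), (xb d), (yb d); split=> //.
by apply/imfsetP; exists d.
Qed.

Lemma Tc_tiling T : is_tiling H T -> is_tiling H (Tc H T).
Proof.
move=> tT; apply: (@tilingI H Hbig); first exact: sepsub.
move=> c cC; have tc := @tiling_cov H Hbig T tT c cC.
case/orP: (@colC H Hbig c cC) => col.
  have hd := oddv_vdn _ col; have hu := oddv_vup _ col.
  have e1 := @LC_b H Hbig T tT (vdn c) true hd.
  have e2 := @LC_b H Hbig T tT (vup c) false hu.
  rewrite /bx b1_vdn b2_vup in e1 e2.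
  rewrite covE_black // in tc; rewrite covE_black // -addnA e1 // e2 //; move: tc; rewrite /cnt /tv.
  by case: (_ \in T); case: (_ \in T); case: (_ \in T); case: (_ \in T).
have hd := oddv_vlf _ col; have hu := oddv_vrt _ col.
have e1 := @LC_w H Hbig T tT (vlf c) true hd.
have e2 := @LC_w H Hbig T tT (vrt c) false hu.
rewrite /wy w1_vlf w2_vrt in e1 e2.
rewrite covE_white // in tc; rewrite covE_white // -addnA e1 // e2 //; move: tc; rewrite /cnt /tv.
by case: (_ \in T); case: (_ \in T); case: (_ \in T); case: (_ \in T).
Qed.


Lemma pk_Tc T c : is_tiling H T -> c \in C -> pk (Tc H T) c = ~~ pk T c.
Proof.
move=> tT cC.
case/orP: (@colC H Hbig c cC) => col.
  have hu := oddv_vup _ col.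
  have e2 := @LC_b H Hbig T tT (vup c) false hu.
  rewrite /bx b2_vup in e2.
  rewrite /pk /pkc (black_par _ col) e2 // /cnt /tv.
  by case: (_ \in T); case: (_ \in T).
have hd := oddv_vlf _ col.
have e1 := @LC_w H Hbig T tT (vlf c) true hd.
rewrite /wy w1_vlf in e1.
rewrite /pk /pkc (white_par _ col) e1 // /cnt /tv.
by case: (_ \in T); case: (_ \in T).
Qed.

Lemma flip_tiling T S : is_tiling H T -> (forall v, v \in S -> fullv H T v) ->
  is_tiling H (flip H T S) /\ same H T (flip H T S).
Proof.
move=> tT hS; split.
  apply: (@tilingI H Hbig); first exact: sepsub.
  move=> c cC; rewrite -(@tiling_cov H Hbig T tT c cC).
  case/orP: (@colC H Hbig c cC) => col.
    have hd := oddv_vdn _ col; have hu := oddv_vup _ col.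
    rewrite !covE_black // -addnA.
    by rewrite (@LF_b H Hbig T tT S hS _ true hd) (@LF_b H Hbig T tT S hS _ false hu) addnA.
  have hd := oddv_vlf _ col; have hu := oddv_vrt _ col.
  rewrite !covE_white // -addnA.
  by rewrite (@LF_w H Hbig T tT S hS _ true hd) (@LF_w H Hbig T tT S hS _ false hu) addnA.
apply/allP => c cC.
case/orP: (@colC H Hbig c cC) => col.
  have hu := oddv_vup _ col.
  by rewrite /pk /pkc (black_par _ col) (@LF_b H Hbig T tT S hS _ false hu).
have hd := oddv_vlf _ col.
by rewrite /pk /pkc (white_par _ col) (@LF_w H Hbig T tT S hS _ true hd).
Qed.


Lemma flip_sub T S1 S2 v : S1 `<=` sinks H T -> flip H T S1 = flip H T S2 -> v \in S1 -> v \in S2.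
Proof.
move=> sub E vS1; have := fsubsetP sub v vS1; rewrite in_sep => /andP[vV].
have hv := Vset_odd vV.
rewrite /fullv /allC => /andP[/and4P[m1 m2 m3 m4] hp].
have key : forall y, tv T v true y -> v \in S2.
  move=> y hy; have := congr1 (fun X => dom v true y \in X) E => /=.
  rewrite !in_flip // /bx /wy; rewrite /tv in hy; rewrite hy vS1 m1.
  by case: y hy => _; rewrite ?m3 ?m4 /=; case: (v \in S2).
by case/orP: hp => /andP[h _]; apply: key h.
Qed.

Lemma posb_same T T' v x : is_tiling H T -> is_tiling H T' -> same H T T' -> oddv v ->
  (cnt T v x true + cnt T v x false)%N = (cnt T' v x true + cnt T' v x false)%N.
Proof.
move=> tT tT' sm hv.
case bC: (bx v x \in C); last first.
  have z : forall X, is_tiling H X -> (cnt X v x true + cnt X v x false)%N = 0%N.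
    move=> X tX; rewrite /cnt.
    case h1: (dom v x true \in X); first by case/andP: (@t_mem H X tX _ _ _ hv h1); rewrite bC.
    case h2: (dom v x false \in X); first by case/andP: (@t_mem H X tX _ _ _ hv h2); rewrite bC.
    by [].
  by rewrite !z.
have p := allP sm _ bC.
have /eqP c1 := @tiling_cov H Hbig T tT _ bC; have /eqP c2 := @tiling_cov H Hbig T' tT' _ bC.
case: x bC p c1 c2 => bC; rewrite /bx in bC *.
  have col := @col_b v true hv; rewrite /bx in col.
  rewrite /pk /pkc (black_par _ col) !covE_black // vdn_b1 /cnt.
  move: (dom v true true \in T) (dom v true false \in T) (dom (vup (b1 v)) false true \in T)
    (dom (vup (b1 v)) false false \in T) (dom v true true \in T') (dom v true false \in T')
    (dom (vup (b1 v)) false true \in T') (dom (vup (b1 v)) false false \in T').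
  by do 8!case.
have col := @col_b v false hv; rewrite /bx in col.
rewrite /pk /pkc (black_par _ col) !covE_black // vup_b2 /cnt.
move: (dom v false true \in T) (dom v false false \in T) (dom (vdn (b2 v)) true true \in T)
  (dom (vdn (b2 v)) true false \in T) (dom v false true \in T') (dom v false false \in T')
  (dom (vdn (b2 v)) true true \in T') (dom (vdn (b2 v)) true false \in T').
by do 8!case.
Qed.

Lemma posw_same T T' v y : is_tiling H T -> is_tiling H T' -> same H T T' -> oddv v ->
  (cnt T v true y + cnt T v false y)%N = (cnt T' v true y + cnt T' v false y)%N.
Proof.
move=> tT tT' sm hv.
case bC: (wy v y \in C); last first.
  have z : forall X, is_tiling H X -> (cnt X v true y + cnt X v false y)%N = 0%N.
    move=> X tX; rewrite /cnt.
    case h1: (dom v true y \in X); first by case/andP: (@t_mem H X tX _ _ _ hv h1); rewrite bC ?andbF.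
    case h2: (dom v false y \in X); first by case/andP: (@t_mem H X tX _ _ _ hv h2); rewrite bC ?andbF.
    by [].
  by rewrite !z.
have p := allP sm _ bC.
have /eqP c1 := @tiling_cov H Hbig T tT _ bC; have /eqP c2 := @tiling_cov H Hbig T' tT' _ bC.
case: y bC p c1 c2 => bC; rewrite /wy in bC *.
  have col := @col_w v true hv; rewrite /wy in col.
  rewrite /pk /pkc (white_par _ col) !covE_white // vlf_w1 /cnt.
  move: (dom v true true \in T) (dom v false true \in T) (dom (vrt (w1 v)) true false \in T)
    (dom (vrt (w1 v)) false false \in T) (dom v true true \in T') (dom v false true \in T')
    (dom (vrt (w1 v)) true false \in T') (dom (vrt (w1 v)) false false \in T').
  by do 8!case.
have col := @col_w v false hv; rewrite /wy in col.
rewrite /pk /pkc (white_par _ col) !covE_white // vrt_w2 /cnt.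
move: (dom v true false \in T) (dom v false false \in T) (dom (vlf (w2 v)) true true \in T)
  (dom (vlf (w2 v)) false true \in T) (dom v true false \in T') (dom v false false \in T')
  (dom (vlf (w2 v)) true true \in T') (dom (vlf (w2 v)) false true \in T').
by do 8!case.
Qed.


Lemma LS T T' v : is_tiling H T -> is_tiling H T' -> same H T T' -> oddv v ->
  (forall x y, tv T' v x y = tv T v x y) \/
  (fullv H T v /\ forall x y, tv T' v x y = ~~ tv T v x y).
Proof.
move=> tT tT' sm hv.
have /eqP e1 := posb_same true tT tT' sm hv; have /eqP e2 := posb_same false tT tT' sm hv.
have /eqP e3 := posw_same true tT tT' sm hv; have /eqP e4 := posw_same false tT tT' sm hv.
have n1 := @bnd_b H Hbig T tT v true hv; have n2 := @bnd_b H Hbig T tT v false hv.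
have n3 := @bnd_w H Hbig T tT v true hv; have n4 := @bnd_w H Hbig T tT v false hv.
have n5 := @bnd_b H Hbig T' tT' v true hv; have n6 := @bnd_b H Hbig T' tT' v false hv.
have n7 := @bnd_w H Hbig T' tT' v true hv; have n8 := @bnd_w H Hbig T' tT' v false hv.
have K : [&& tv T' v true true == tv T v true true, tv T' v true false == tv T v true false,
             tv T' v false true == tv T v false true & tv T' v false false == tv T v false false]
  || [&& tv T' v true true == ~~ tv T v true true, tv T' v true false == ~~ tv T v true false,
         tv T' v false true == ~~ tv T v false true, tv T' v false false == ~~ tv T v false false
       & (tv T v true true && tv T v false false) || (tv T v true false && tv T v false true)].
  move: e1 e2 e3 e4 n1 n2 n3 n4 n5 n6 n7 n8; rewrite /tv /cnt.
  move: (dom v true true \in T) (dom v true false \in T) (dom v false true \in T) (dom v false false \in T)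
    (dom v true true \in T') (dom v true false \in T') (dom v false true \in T') (dom v false false \in T').
  by do 8!case.
case/orP: K => [/and4P[/eqP f1 /eqP f2 /eqP f3 /eqP f4] | /and5P[/eqP f1 /eqP f2 /eqP f3 /eqP f4 hp]].
  by left => [[] []].
right; split; last by move=> [] [].
rewrite /fullv hp andbT /allC.
case/orP: hp => /andP[h1 h2].
  case/andP: (@t_mem H T tT _ _ _ hv h1) => -> ->.
  by case/andP: (@t_mem H T tT _ _ _ hv h2) => -> ->.
case/andP: (@t_mem H T tT _ _ _ hv h1) => -> ->.
by case/andP: (@t_mem H T tT _ _ _ hv h2) => -> ->.
Qed.

Lemma same_flip T T' : is_tiling H T -> is_tiling H T' -> same H T T' ->
  T' = flip H T [fset v in sinks H T | tv T v true true != tv T' v true true].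
Proof.
move=> tT tT' sm; apply/fsetP => d.
case dD: (d \in D); last first.
  rewrite /flip in_sep dD /=; apply/negbTE; apply/negP => dT'.
  by rewrite (fsubsetP (@tiling_sub H T' tT') _ dT') in dD.
have [v [x [y [hv E vV]]]] := D_dom dD.
rewrite E in dD *; rewrite in_flip //; rewrite dom_inD // in dD.
case/andP: dD => -> -> /=.
rewrite !in_sep vV /=.
case: (LS tT tT' sm hv) => [eq | [fu cp]].
  by rewrite eq eqxx andbF addbF; have := eq x y; rewrite /tv.
rewrite fu cp /=.
have -> : (tv T v true true != ~~ tv T v true true) by case: (tv T v true true).
by rewrite addbT; have := cp x y; rewrite /tv.
Qed.

Lemma sinks_Tc T : is_tiling H T -> sinks H (Tc H T) = sources H T.
Proof.
move=> tT; apply/fsetP => v; rewrite !in_sep.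
case vV: (v \in Vset H) => //=.
exact: (@full_Tc H Hbig T tT v (Vset_odd vV)).
Qed.

Lemma in_tilings T : (T \in tilings H) = is_tiling H T.
Proof.
rewrite /tilings in_sep fpowersetE.
case tT: (is_tiling H T); rewrite ?andbF ?andbT //.
exact: (@tiling_sub H T tT).
Qed.

Definition cls T := [fset T' in tilings H | same H T T'].

Lemma card_cls T : is_tiling H T -> #|` cls T| = (2 ^ #|` sinks H T|)%N.
Proof.
move=> tT.
have E : cls T = [fset flip H T S | S in fpowerset (sinks H T)].
  apply/fsetP => T'; rewrite in_sep in_tilings; apply/andP/imfsetP.
    case=> tT' sm; exists [fset v in sinks H T | tv T v true true != tv T' v true true].
      by rewrite /= fpowersetE; exact: sepsub.
    exact: same_flip.
  case=> S /=; rewrite fpowersetE => sub ->; apply: flip_tiling => // v vS.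
  by have := fsubsetP sub v vS; rewrite in_sep => /andP[_].
have inj : {in fpowerset (sinks H T) &, injective (flip H T)}.
  move=> S1 S2; rewrite !fpowersetE => s1 s2 E12; apply/fsetP => v; apply/idP/idP.
    exact: flip_sub s1 E12.
  exact: flip_sub s2 (esym E12).
rewrite E; move/card_in_imfsetP: inj => /eqP ->.
exact: card_fpowerset.
Qed.

End K.

Lemma sum_pred1 (T : eqType) (r : seq T) k (F : T -> nat) : uniq r ->
  (\sum_(i <- r) ((i == k) * F i) = (k \in r) * F k)%N.
Proof.
elim: r => [|a r IH] /=; first by rewrite big_nil.
case/andP=> anr ur; rewrite big_cons IH // inE.
case: (eqVneq a k) => [<-|ne] /=; last by rewrite add0n.
by rewrite (negbTE anr) mul0n addn0.

Qed.

Lemma card_sep (K : choiceType) (A : {fset K}) (P : pred K) :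
  #|` [fset x in A | P x]| = (\sum_(x <- A) (P x : nat))%N.
Proof.
have -> : [fset x in A | P x] = [fset x in [seq x <- A | P x]].
  by apply/fsetP => x; rewrite !inE mem_filter andbC.
rewrite card_fseq undup_id ?filter_uniq ?fset_uniq // size_filter -sum1_count big_mkcond /=.
by apply: eq_bigr => x _; case: (P x).
Qed.

Lemma eq_b1 c v : (c == b1 v) = (v == vdn c).
Proof. by case: c v => [p q] [a b]; rewrite /b1 /vdn /= !xpair_eqE; lia. Qed.
Lemma eq_b2 c v : (c == b2 v) = (v == vup c).
Proof. by case: c v => [p q] [a b]; rewrite /b2 /vup /= !xpair_eqE; lia. Qed.
Lemma eq_w1 c v : (c == w1 v) = (v == vlf c).
Proof. by case: c v => [p q] [a b]; rewrite /w1 /vlf /= !xpair_eqE; lia. Qed.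
Lemma eq_w2 c v : (c == w2 v) = (v == vrt c).
Proof. by case: c v => [p q] [a b]; rewrite /w2 /vrt /= !xpair_eqE; lia. Qed.

Lemma notodd_vlf c : is_black c -> oddv (vlf c) = false.
Proof. by case: c => p q; rewrite /is_black /oddv /vlf /=; lia. Qed.
Lemma notodd_vrt c : is_black c -> oddv (vrt c) = false.
Proof. by case: c => p q; rewrite /is_black /oddv /vrt /=; lia. Qed.
Lemma notodd_vdn c : is_white c -> oddv (vdn c) = false.
Proof. by case: c => p q; rewrite /is_white /oddv /vdn /=; lia. Qed.
Lemma notodd_vup c : is_white c -> oddv (vup c) = false.
Proof. by case: c => p q; rewrite /is_white /oddv /vup /=; lia. Qed.

Definition mRU (w : pt) : pt := (w.1 + 1, w.2 + 1).
Definition mRD (w : pt) : pt := (w.1 + 1, w.2 - 1).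
Definition mLD (w : pt) : pt := (w.1 - 1, w.2 - 1).
Definition mLU (w : pt) : pt := (w.1 - 1, w.2 + 1).

Lemma eRU (v w : pt) : (v == mRU w) = (w == mLD v).
Proof. by case: w v => [a b] [p q]; rewrite /mRU /mLD /= !xpair_eqE; lia. Qed.
Lemma eRD (v w : pt) : (v == mRD w) = (w == mLU v).
Proof. by case: w v => [a b] [p q]; rewrite /mRD /mLU /= !xpair_eqE; lia. Qed.
Lemma eLD (v w : pt) : (v == mLD w) = (w == mRU v).
Proof. by case: w v => [a b] [p q]; rewrite /mRU /mLD /= !xpair_eqE; lia. Qed.
Lemma eLU (v w : pt) : (v == mLU w) = (w == mRD v).
Proof. by case: w v => [a b] [p q]; rewrite /mRD /mLU /= !xpair_eqE; lia. Qed.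

Lemma mid_odd w : is_big w ->
  [&& oddv (mRU w), oddv (mRD w), oddv (mLD w) & oddv (mLU w)].
Proof. by rewrite is_big_char; case: w => a b; rewrite /oddv /mRU /mRD /mLD /mLU /=; lia. Qed.

Section P.
Variable H : {fset pt}.
Hypothesis Hbig : forall w, w \in H -> is_big w.
Local Notation C := (dom_cells H).
Local Notation D := (dominoes H).
Local Notation Vs := (Vset H).

Lemma Vset_cell v x y : oddv v -> bx v x \in C -> wy v y \in C -> v \in Vs.
Proof.
move=> hv h1 h2; apply/imfsetP; exists (dom v x y); last by rewrite ov_dom.
by rewrite /= dom_inD // h1 h2.
Qed.

Lemma Vset_b v x : oddv v -> bx v x \in C -> v \in Vs.
Proof.
move=> hv h; apply: (@Vset_cell v x (if Aint v then x else ~~ x)) => //.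
by rewrite -(@pairC H Hbig v x hv).
Qed.

Lemma Vset_w v y : oddv v -> wy v y \in C -> v \in Vs.
Proof.
move=> hv h.
have [x ex] : exists x, (if Aint v then x else ~~ x) = y.
  by case: (Aint v); [exists y | exists (~~ y); rewrite negbK].
apply: (@Vset_cell v x y) => //.
by rewrite (@pairC H Hbig v x hv) ex.
Qed.

Definition inc (f : pt -> bool -> bool -> nat) c : nat :=
  if ((c.1 %% 2)%Z == 0) then (f (vdn c) true true + f (vup c) true false)%N
  else (f (vlf c) false true + f (vrt c) false false)%N.
Definition vsum (f : pt -> bool -> bool -> nat) v : nat :=
  ((b1 v \in C) * f v true true + (b2 v \in C) * f v true false +
   (w1 v \in C) * f v false true + (w2 v \in C) * f v false false)%N.

Lemma RG f : (\sum_(c <- C) inc f c = \sum_(v <- Vs) vsum f v)%N.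
Proof.
have E : forall v, vsum f v = (\sum_(c <- C) ((c == b1 v) * f v true true + (c == b2 v) * f v true false +
   (c == w1 v) * f v false true + (c == w2 v) * f v false false))%N.
  move=> v; rewrite !big_split /=.
  by rewrite !(@sum_pred1 _ _ _ (fun _ => _)) ?fset_uniq.
under [RHS]eq_bigr do rewrite E.
rewrite exchange_big /= big_seq [RHS]big_seq.
apply: eq_bigr => c cC.
under eq_bigr do rewrite (eq_b1 c) (eq_b2 c) (eq_w1 c) (eq_w2 c).
rewrite !big_split /= !sum_pred1 ?fset_uniq //.
case/orP: (@colC H Hbig c cC) => col.
  rewrite /inc (black_par _ col).
  have -> : vlf c \in Vs = false by apply/negbTE/negP => /Vset_odd; rewrite notodd_vlf.
  have -> : vrt c \in Vs = false by apply/negbTE/negP => /Vset_odd; rewrite notodd_vrt.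
  rewrite (@Vset_b (vdn c) true (oddv_vdn _ col)) /bx ?b1_vdn //.
  rewrite (@Vset_b (vup c) false (oddv_vup _ col)) /bx ?b2_vup //.
  by rewrite !mul1n !mul0n !addn0.
rewrite /inc (white_par _ col).
have -> : vdn c \in Vs = false by apply/negbTE/negP => /Vset_odd; rewrite notodd_vdn.
have -> : vup c \in Vs = false by apply/negbTE/negP => /Vset_odd; rewrite notodd_vup.
rewrite (@Vset_w (vlf c) true (oddv_vlf _ col)) /wy ?w1_vlf //.
rewrite (@Vset_w (vrt c) false (oddv_vrt _ col)) /wy ?w2_vrt //.
by rewrite !mul1n !mul0n !add0n.
Qed.


Lemma notH p : ~~ is_big p -> p \notin H.
Proof. by apply: contra => /Hbig. Qed.

Lemma cellC w c : w \in H -> c \in big_cells w -> c \in C.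
Proof. move=> wH cw; apply/bigfcupP; exists w; first by rewrite wH. by rewrite in_fset. Qed.

Definition nb (w v : pt) : nat :=
  ((v == mRU w) + (v == mRD w) + (v == mLD w) + (v == mLU w))%N.

Lemma nb_sum v : oddv v -> (\sum_(w <- H) nb w v =
  if Aint v then (mLD v \in H) + (mRU v \in H) else (mLU v \in H) + (mRD v \in H))%N.
Proof.
move=> hv.
have e1 := eRU v; have e2 := eRD v; have e3 := eLD v; have e4 := eLU v.
have cnt1 : forall k, (\sum_(w <- H) (w == k) = (k \in H))%N.
  move=> k; have := @sum_pred1 _ H k (fun _ => 1%N) (fset_uniq H); rewrite muln1 => <-.
  by apply: eq_bigr => i _; rewrite muln1.
rewrite /nb; under eq_bigr => w _ do rewrite e1 e2 e3 e4.
rewrite !big_split /= !cnt1.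
have nb1 : forall p, ~~ is_big p -> (p \in H) = false by move=> p /notH /negbTE.
clear e1 e2 e3 e4 cnt1; case: v hv => p q hv /=.
case hA: (Aint (p, q)).
  rewrite (nb1 (mLU (p, q))) ?(nb1 (mRD (p, q))) ?addn0 ?add0n 1?addnC //.
    by rewrite is_big_char /mRD; move: hv hA; rewrite /oddv /Aint /=; lia.
  by rewrite is_big_char /mLU; move: hv hA; rewrite /oddv /Aint /=; lia.
rewrite (nb1 (mLD (p, q))) ?(nb1 (mRU (p, q))) ?addn0 ?add0n //.
  by rewrite is_big_char /mRU; move: hv hA; rewrite /oddv /Aint /=; lia.
by rewrite is_big_char /mLD; move: hv hA; rewrite /oddv /Aint /=; lia.
Qed.


Lemma blk_b1 v : oddv v -> blk (b1 v) = if Aint v then mRU v else mLU v.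
Proof.
case: v => p q; rewrite /oddv /Aint /blk /b1 /mRU /mLU /= => hv.
by repeat case: ifP => /=; move=> *; apply/eqP; rewrite ?xpair_eqE; lia.
Qed.
Lemma blk_b2 v : oddv v -> blk (b2 v) = if Aint v then mLD v else mRD v.
Proof.
case: v => p q; rewrite /oddv /Aint /blk /b2 /mLD /mRD /= => hv.
by repeat case: ifP => /=; move=> *; apply/eqP; rewrite ?xpair_eqE; lia.
Qed.
Lemma blk_w1 v : oddv v -> blk (w1 v) = if Aint v then mRU v else mRD v.
Proof.
case: v => p q; rewrite /oddv /Aint /blk /w1 /mRU /mRD /= => hv.
by repeat case: ifP => /=; move=> *; apply/eqP; rewrite ?xpair_eqE; lia.
Qed.
Lemma blk_w2 v : oddv v -> blk (w2 v) = if Aint v then mLD v else mLU v.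
Proof.
case: v => p q; rewrite /oddv /Aint /blk /w2 /mLD /mLU /= => hv.
by repeat case: ifP => /=; move=> *; apply/eqP; rewrite ?xpair_eqE; lia.
Qed.

Definition nC v : nat := ((b1 v \in C) + (b2 v \in C) + (w1 v \in C) + (w2 v \in C))%N.

Lemma nC_nb v : oddv v -> nC v = (2 * \sum_(w <- H) nb w v)%N.
Proof.
move=> hv; rewrite nb_sum // /nC !(@memC H Hbig).
have c1 := col_b v true hv; have c2 := col_b v false hv.
have c3 := col_w v true hv; have c4 := col_w v false hv.
rewrite /bx /wy in c1 c2 c3 c4.
rewrite c1 c2 c3 c4 !orbT /= blk_b1 // blk_b2 // blk_w1 // blk_w2 //.
by case: (Aint v); case: (_ \in H); case: (_ \in H).
Qed.

Lemma in_bc w c : c \in big_cells w =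
  [|| c == (w.1 + 1, w.2), c == (w.1 - 1, w.2), c == (w.1, w.2 + 1) | c == (w.1, w.2 - 1)].
Proof.
rewrite /big_cells !inE /padd /psub /popp /=.
by case: w c => [a b] [p q] /=; rewrite !xpair_eqE ?oppr0 ?addr0 ?subr0.
Qed.

Lemma mids_Vs w : w \in H ->
  [/\ mRU w \in Vs, mRD w \in Vs, mLD w \in Vs & mLU w \in Vs].
Proof.
move=> wH; have wb := Hbig wH.
case/and4P: (mid_odd wb) => o1 o2 o3 o4.
split.
- apply: (@Vset_b _ false o1); apply: (cellC wH); rewrite in_bc.
  by clear; case: w => a b; rewrite /bx /b2 /mRU /= !xpair_eqE; lia.
- apply: (@Vset_b _ true o2); apply: (cellC wH); rewrite in_bc.
  by clear; case: w => a b; rewrite /bx /b1 /mRD /= !xpair_eqE; lia.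
- apply: (@Vset_b _ true o3); apply: (cellC wH); rewrite in_bc.
  by clear; case: w => a b; rewrite /bx /b1 /mLD /= !xpair_eqE; lia.
- apply: (@Vset_b _ false o4); apply: (cellC wH); rewrite in_bc.
  by clear; case: w => a b; rewrite /bx /b2 /mLU /= !xpair_eqE; lia.
Qed.

Lemma RB (h : pt -> nat) :
  (\sum_(v <- Vs) (nC v == 2%N) * h v =
   \sum_(w <- H) ((nC (mRU w) == 2%N) * h (mRU w) + (nC (mRD w) == 2%N) * h (mRD w) +
                  (nC (mLD w) == 2%N) * h (mLD w) + (nC (mLU w) == 2%N) * h (mLU w)))%N.
Proof.
set h2 := fun v => ((nC v == 2%N) * h v)%N.
have E : forall w, w \in H ->
   ((nC (mRU w) == 2%N) * h (mRU w) + (nC (mRD w) == 2%N) * h (mRD w) +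
    (nC (mLD w) == 2%N) * h (mLD w) + (nC (mLU w) == 2%N) * h (mLU w) =
   \sum_(v <- Vs) nb w v * h2 v)%N.
  move=> w wH; case: (mids_Vs wH) => i1 i2 i3 i4.
  rewrite /nb; under eq_bigr do rewrite !mulnDl.
  rewrite !big_split /= !sum_pred1 ?fset_uniq //.
  by rewrite i1 i2 i3 i4 !mul1n.
rewrite [RHS]big_seq_cond; under [RHS]eq_bigr => w /andP[wH _] do rewrite (E w wH).
rewrite -big_seq_cond exchange_big /= big_seq [RHS]big_seq.
apply: eq_bigr => v vV.
rewrite -big_distrl /= /h2.
have hv := Vset_odd vV.
case e2: (nC v == 2%N); last by rewrite !muln0.
move: e2; rewrite nC_nb // => /eqP e2.
have -> : (\sum_(w <- H) nb w v = 1)%N by lia.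
by rewrite mul1n.
Qed.


Lemma notC w' c : is_big w' -> c \in big_cells w' -> w' \notin H -> c \notin C.
Proof.
move=> hb hc nH; rewrite (@memC H Hbig).
case/andP: (big_cellsP w' c hb hc) => _ /eqP ->.
by rewrite (negbTE nH) andbF.
Qed.

Lemma nC_RU w : w \in H -> (nC (mRU w) == 2%N) = (padd w (2, 2) \notin H).
Proof.
move=> wH; have wb := Hbig wH; case/and4P: (mid_odd wb) => o1 _ _ _.
rewrite nC_nb // nb_sum //.
have -> : Aint (mRU w) by move: wb; rewrite is_big_char /Aint /mRU; case: w {wH o1} => a b /=; lia.
have -> : mLD (mRU w) = w by case: w {wH wb o1} => a b; rewrite /mLD /mRU /= !addrK.
have -> : mRU (mRU w) = padd w (2, 2).
  by case: w {wH wb o1} => a b; apply/eqP; rewrite /mRU /padd /= xpair_eqE; lia.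
by rewrite wH; case: (_ \in H).
Qed.

Lemma nC_RD w : w \in H -> (nC (mRD w) == 2%N) = (padd w (2, -2) \notin H).
Proof.
move=> wH; have wb := Hbig wH; case/and4P: (mid_odd wb) => _ o1 _ _.
rewrite nC_nb // nb_sum //.
have -> : Aint (mRD w) = false by move: wb; rewrite is_big_char /Aint /mRD; case: w {wH o1} => a b /=; lia.
have -> : mLU (mRD w) = w.
  by case: w {wH wb o1} => a b; apply/eqP; rewrite /mLU /mRD /= xpair_eqE; lia.
have -> : mRD (mRD w) = padd w (2, -2).
  by case: w {wH wb o1} => a b; apply/eqP; rewrite /mRD /padd /= xpair_eqE; lia.
by rewrite wH; case: (_ \in H).
Qed.

Lemma nC_LD w : w \in H -> (nC (mLD w) == 2%N) = (padd w (popp (2, 2)) \notin H).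
Proof.
move=> wH; have wb := Hbig wH; case/and4P: (mid_odd wb) => _ _ o1 _.
rewrite nC_nb // nb_sum //.
have -> : Aint (mLD w) by move: wb; rewrite is_big_char /Aint /mLD; case: w {wH o1} => a b /=; lia.
have -> : mRU (mLD w) = w.
  by case: w {wH wb o1} => a b; apply/eqP; rewrite /mLD /mRU /= xpair_eqE; lia.
have -> : mLD (mLD w) = padd w (popp (2, 2)).
  by case: w {wH wb o1} => a b; apply/eqP; rewrite /mLD /padd /popp /= xpair_eqE; lia.
by rewrite wH; case: (_ \in H).
Qed.

Lemma nC_LU w : w \in H -> (nC (mLU w) == 2%N) = (padd w (popp (2, -2)) \notin H).
Proof.
move=> wH; have wb := Hbig wH; case/and4P: (mid_odd wb) => _ _ _ o1.
rewrite nC_nb // nb_sum //.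
have -> : Aint (mLU w) = false by move: wb; rewrite is_big_char /Aint /mLU; case: w {wH o1} => a b /=; lia.
have -> : mRD (mLU w) = w.
  by case: w {wH wb o1} => a b; apply/eqP; rewrite /mLU /mRD /= xpair_eqE; lia.
have -> : mLU (mLU w) = padd w (popp (2, -2)).
  by case: w {wH wb o1} => a b; apply/eqP; rewrite /mLU /padd /popp /= xpair_eqE; lia.
by rewrite wH; case: (_ \in H) => //; rewrite addnC.
Qed.

End P.

Definition nT (X : {fset pt * pt}) v : nat :=
  (cnt X v true true + cnt X v true false + cnt X v false true + cnt X v false false)%N.

Lemma two_one (x y : nat) : (x + y = 1)%N -> ((x == 0) + (y == 0) = (x == 1) + (y == 1))%N.
Proof. by case: x => [|[|x]]; case: y => [|[|y]]. Qed.

Lemma sum_lin (r : seq pt) (f1 f2 f3 g1 g2 g3 : pt -> nat) :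
  (forall v, v \in r -> 4 * f1 v + 4 * f2 v + 2 * f3 v = g1 v + 4 * g2 v + 2 * g3 v)%N ->
  (4 * \sum_(v <- r) f1 v + 4 * \sum_(v <- r) f2 v + 2 * \sum_(v <- r) f3 v =
   \sum_(v <- r) g1 v + 4 * \sum_(v <- r) g2 v + 2 * \sum_(v <- r) g3 v)%N.
Proof. by move=> h; rewrite !big_distrr -!big_split; apply: eq_big_seq. Qed.

Lemma two_one' (x y : nat) : (x + y = 1)%N -> ((y == 0) + (x == 0) = (y == 1) + (x == 1))%N.
Proof. by case: x => [|[|x]]; case: y => [|[|y]]. Qed.

Section Q.
Variable H : {fset pt}.
Hypothesis Hbig : forall w, w \in H -> is_big w.
Local Notation C := (dom_cells H).
Local Notation D := (dominoes H).
Local Notation Vs := (Vset H).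
Variable T : {fset pt * pt}.
Hypothesis tT : is_tiling H T.

Lemma zb v x y : oddv v -> bx v x \notin C -> cnt T v x y = 0%N.
Proof.
move=> hv nC; rewrite /cnt; case dT: (dom v x y \in T) => //.
by case/andP: (@t_mem H T tT _ _ _ hv dT) => h _; rewrite h in nC.
Qed.
Lemma zw v x y : oddv v -> wy v y \notin C -> cnt T v x y = 0%N.
Proof.
move=> hv nC; rewrite /cnt; case dT: (dom v x y \in T) => //.
by case/andP: (@t_mem H T tT _ _ _ hv dT) => _ h; rewrite h in nC.
Qed.

Lemma corner_b c : c \in C -> is_black c -> b1 (vup c) \notin C -> b2 (vdn c) \notin C ->
  (nT T (vup c) + nT T (vdn c) = 1)%N.
Proof.
move=> cC col n1 n2.
have := @tiling_cov H Hbig T tT c cC; rewrite covE_black //.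
have hu := oddv_vup _ col; have hd := oddv_vdn _ col.
rewrite /nT (@zb (vup c) true true) ?(@zb (vup c) true false) ?(@zb (vdn c) false true)
  ?(@zb (vdn c) false false) //.
lia.
Qed.

Lemma corner_w c : c \in C -> is_white c -> w2 (vlf c) \notin C -> w1 (vrt c) \notin C ->
  (nT T (vlf c) + nT T (vrt c) = 1)%N.
Proof.
move=> cC col n1 n2.
have := @tiling_cov H Hbig T tT c cC; rewrite covE_white //.
have hu := oddv_vlf _ col; have hd := oddv_vrt _ col.
rewrite /nT (@zw (vlf c) true false) ?(@zw (vlf c) false false) ?(@zw (vrt c) true true)
  ?(@zw (vrt c) false true) //.
lia.
Qed.


Lemma PB w : w \in H -> hedgehog_local H w ->
  ((nC H (mRU w) == 2%N) * (nT T (mRU w) == 0%N) + (nC H (mRD w) == 2%N) * (nT T (mRD w) == 0%N) +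
   (nC H (mLD w) == 2%N) * (nT T (mLD w) == 0%N) + (nC H (mLU w) == 2%N) * (nT T (mLU w) == 0%N) =
   (nC H (mRU w) == 2%N) * (nT T (mRU w) == 1%N) + (nC H (mRD w) == 2%N) * (nT T (mRD w) == 1%N) +
   (nC H (mLD w) == 2%N) * (nT T (mLD w) == 1%N) + (nC H (mLU w) == 2%N) * (nT T (mLU w) == 1%N))%N.
Proof.
move=> wH hl; have wb := Hbig wH.
have wb' := wb; rewrite is_big_char in wb'.
have bigs : [&& is_big (padd w (2, 2)), is_big (padd w (2, -2)), is_big (padd w (popp (2, 2)))
   & is_big (padd w (popp (2, -2)))].
  by rewrite !is_big_char; move: wb'; case: w {wH wb hl} => a b; rewrite /padd /popp /=; lia.
case/and4P: bigs => g1 g2 g3 g4.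
have cR : padd w (2, 2) \notin H -> padd w (2, -2) \notin H -> (nT T (mRU w) + nT T (mRD w) = 1)%N.
  move=> h1 h2.
  have := @corner_b (w.1 + 1, w.2).
  rewrite /vup /vdn /=; apply.
  - by apply: (cellC wH); rewrite in_bc eqxx.
  - by move: wb'; rewrite /is_black; case: w {wH wb hl h1 h2 g1 g2 g3 g4} => a b /=; lia.
  - apply: (notC Hbig g1 _ h1); rewrite in_bc /b1 /padd.
    by case: w {wH wb wb' hl h1 h2 g1 g2 g3 g4} => a b /=; rewrite !xpair_eqE; lia.
  - apply: (notC Hbig g2 _ h2); rewrite in_bc /b2 /padd.
    by case: w {wH wb wb' hl h1 h2 g1 g2 g3 g4} => a b /=; rewrite !xpair_eqE; lia.
have cB : padd w (2, -2) \notin H -> padd w (popp (2, 2)) \notin H -> (nT T (mLD w) + nT T (mRD w) = 1)%N.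
  move=> h1 h2.
  have := @corner_w (w.1, w.2 - 1).
  rewrite /vlf /vrt /=; apply.
  - by apply: (cellC wH); rewrite in_bc eqxx !orbT.
  - by move: wb'; rewrite /is_white; case: w {wH wb hl h1 h2 g1 g2 g3 g4 cR} => a b /=; lia.
  - apply: (notC Hbig g3 _ h2); rewrite in_bc /w2 /padd /popp.
    by case: w {wH wb wb' hl h1 h2 g1 g2 g3 g4 cR} => a b /=; rewrite !xpair_eqE; lia.
  - apply: (notC Hbig g2 _ h1); rewrite in_bc /w1 /padd.
    by case: w {wH wb wb' hl h1 h2 g1 g2 g3 g4 cR} => a b /=; rewrite !xpair_eqE; lia.
have cL : padd w (popp (2, 2)) \notin H -> padd w (popp (2, -2)) \notin H -> (nT T (mLU w) + nT T (mLD w) = 1)%N.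
  move=> h1 h2.
  have := @corner_b (w.1 - 1, w.2).
  rewrite /vup /vdn /=; apply.
  - by apply: (cellC wH); rewrite in_bc eqxx !orbT.
  - by move: wb'; rewrite /is_black; case: w {wH wb hl h1 h2 g1 g2 g3 g4 cR cB} => a b /=; lia.
  - apply: (notC Hbig g4 _ h2); rewrite in_bc /b1 /padd /popp.
    by case: w {wH wb wb' hl h1 h2 g1 g2 g3 g4 cR cB} => a b /=; rewrite !xpair_eqE; lia.
  - apply: (notC Hbig g3 _ h1); rewrite in_bc /b2 /padd /popp.
    by case: w {wH wb wb' hl h1 h2 g1 g2 g3 g4 cR cB} => a b /=; rewrite !xpair_eqE; lia.
have cT : padd w (popp (2, -2)) \notin H -> padd w (2, 2) \notin H -> (nT T (mLU w) + nT T (mRU w) = 1)%N.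
  move=> h1 h2.
  have := @corner_w (w.1, w.2 + 1).
  rewrite /vlf /vrt /=; apply.
  - by apply: (cellC wH); rewrite in_bc eqxx !orbT.
  - by move: wb'; rewrite /is_white; case: w {wH wb hl h1 h2 g1 g2 g3 g4 cR cB cL} => a b /=; lia.
  - apply: (notC Hbig g4 _ h1); rewrite in_bc /w2 /padd /popp.
    by case: w {wH wb wb' hl h1 h2 g1 g2 g3 g4 cR cB cL} => a b /=; rewrite !xpair_eqE; lia.
  - apply: (notC Hbig g1 _ h2); rewrite in_bc /w1 /padd.
    by case: w {wH wb wb' hl h1 h2 g1 g2 g3 g4 cR cB cL} => a b /=; rewrite !xpair_eqE; lia.
rewrite (nC_RU Hbig wH) (nC_RD Hbig wH) (nC_LD Hbig wH) (nC_LU Hbig wH).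
move: hl cR cB cL cT; rewrite /hedgehog_local /side_on_bdry.
move: (nT T (mRU w)) (nT T (mRD w)) (nT T (mLD w)) (nT T (mLU w)) => n1 n2 n3 n4.
case: (padd w (2, 2) \in H); case: (padd w (2, -2) \in H);
  case: (padd w (popp (2, 2)) \in H); case: (padd w (popp (2, -2)) \in H) => //= _;
  move=> cR cB cL cT; rewrite ?mul0n ?mul1n ?add0n ?addn0.
all: first [ exact: two_one (cR erefl erefl) | exact: two_one' (cR erefl erefl)
  | exact: two_one (cB erefl erefl) | exact: two_one' (cB erefl erefl)
  | exact: two_one (cL erefl erefl) | exact: two_one' (cL erefl erefl)
  | exact: two_one (cT erefl erefl) | exact: two_one' (cT erefl erefl) ].
Qed.


Lemma PV v : oddv v ->
  (4 * nT T v + 4 * emptyv H T v + 2 * ((nC H v == 2%N) * (nT T v == 0%N)) ==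
   nC H v + 4 * fullv H T v + 2 * ((nC H v == 2%N) * (nT T v == 1%N)))%N.
Proof.
move=> hv.
have /eqP p1 := @pairC H Hbig v true hv.
have /eqP p2 := @pairC H Hbig v false hv.
have /implyP m1 := @t_mem H T tT v true true hv; have /implyP m2 := @t_mem H T tT v true false hv.
have /implyP m3 := @t_mem H T tT v false true hv; have /implyP m4 := @t_mem H T tT v false false hv.
have n1 := @bnd_b H Hbig T tT v true hv; have n2 := @bnd_b H Hbig T tT v false hv.
have n3 := @bnd_w H Hbig T tT v true hv; have n4 := @bnd_w H Hbig T tT v false hv.
move: p1 p2 m1 m2 m3 m4 n1 n2 n3 n4.
rewrite /nT /nC /emptyv /fullv /allC /tv /cnt /bx /wy.
by case: (Aint v) => /=; move: (b1 v \in C) (b2 v \in C) (w1 v \in C) (w2 v \in C) (dom v true true \in T) (dom v true false \in T) (dom v false true \in T) (dom v false false \in T); do 8!case.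
Qed.

Lemma vsum2 v : oddv v ->
  vsum H (fun v k z => if k then (cnt T v z true + cnt T v z false)%N
                       else (cnt T v true z + cnt T v false z)%N) v = (2 * nT T v)%N.
Proof.
move=> hv.
have /implyP m1 := @t_mem H T tT v true true hv; have /implyP m2 := @t_mem H T tT v true false hv.
have /implyP m3 := @t_mem H T tT v false true hv; have /implyP m4 := @t_mem H T tT v false false hv.
apply/eqP; move: m1 m2 m3 m4.
rewrite /vsum /nT /cnt /bx /wy /=.
by move: (b1 v \in C) (b2 v \in C) (w1 v \in C) (w2 v \in C) (dom v true true \in T) (dom v true false \in T) (dom v false true \in T) (dom v false false \in T); do 8!case.
Qed.

Hypothesis hH : hedgehog H.

Lemma sinks_sources : #|` sinks H T| = #|` sources H T|.
Proof.
have A1 : (\sum_(v <- Vs) nC H v = 2 * \sum_(c <- C) 1)%N.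
  have := RG Hbig (fun _ _ _ => 1%N).
  rewrite /vsum; under [RHS]eq_bigr do rewrite !muln1.
  move=> <-; rewrite big_distrr /=; apply: eq_bigr => c _.
  by rewrite /inc; case: ifP.
have A2 : (\sum_(v <- Vs) (2 * nT T v) = \sum_(c <- C) 1)%N.
  have := RG Hbig (fun v k z => if k then (cnt T v z true + cnt T v z false)%N
                       else (cnt T v true z + cnt T v false z)%N).
  rewrite [in X in _ = X -> _]big_seq.
  under [in X in _ = X -> _]eq_bigr => v vV do rewrite (vsum2 (Vset_odd vV)).
  move=> E; rewrite big_seq -E big_seq [RHS]big_seq; apply: eq_bigr => c cC.
  rewrite -(@tiling_cov H Hbig T tT c cC) /inc.
  case/orP: (@colC H Hbig c cC) => col.
    by rewrite (black_par _ col) covE_black // !addnA.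
  by rewrite (white_par _ col) covE_white // !addnA.
have A3 : (\sum_(v <- Vs) ((nC H v == 2%N) * (nT T v == 0%N)) =
           \sum_(v <- Vs) ((nC H v == 2%N) * (nT T v == 1%N)))%N.
  rewrite (RB Hbig (fun v => (nT T v == 0%N) : nat)) (RB Hbig (fun v => (nT T v == 1%N) : nat)).
  rewrite big_seq [RHS]big_seq; apply: eq_bigr => w wH.
  case: hH => _ _ _ hl.
  exact: PB wH (hl w wH).
have A4 := @sum_lin Vs (nT T) (fun v => emptyv H T v : nat)
  (fun v => ((nC H v == 2%N) * (nT T v == 0%N))%N) (nC H) (fun v => fullv H T v : nat)
  (fun v => ((nC H v == 2%N) * (nT T v == 1%N))%N).
have A5 : (2 * \sum_(v <- Vs) nT T v = \sum_(c <- C) 1)%N by rewrite big_distrr.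
rewrite -A3 in A4.
have {A4} A4 := A4 (fun v vV => (eqP (PV (Vset_odd vV)))).
rewrite /sinks /sources !card_sep.
cbv beta in A4.
have key : forall N S E F K B : nat, N = (2 * K)%N -> (4 * S + 4 * E + 2 * B = N + 4 * F + 2 * B)%N -> (2 * S = K)%N -> F = E by move=> *; lia.
exact: key A1 A4 A5.
Qed.

End Q.

Definition T0 H := [fset d in dominoes H | Aint (ov d) && (xb d == yb d)].

Section F.
Variable H : {fset pt}.
Hypothesis Hbig : forall w, w \in H -> is_big w.
Local Notation C := (dom_cells H).
Local Notation D := (dominoes H).

Lemma in_T0 v x y : oddv v ->
  (dom v x y \in T0 H) = [&& bx v x \in C, wy v y \in C, Aint v & x == y].
Proof.
by move=> hv; rewrite /T0 in_sep dom_inD // ov_dom xb_dom yb_dom !andbA.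
Qed.

Lemma T0_tiling : is_tiling H (T0 H).
Proof.
apply: (@tilingI H Hbig); first exact: sepsub.
move=> c cC; case/orP: (@colC H Hbig c cC) => col.
  have hd := oddv_vdn _ col; have hu := oddv_vup _ col.
  rewrite covE_black // /cnt !in_T0 //.
  have /eqP p1 := @pairC H Hbig (vdn c) true hd.
  have /eqP p2 := @pairC H Hbig (vup c) false hu.
  move: p1 p2; rewrite /bx /wy b1_vdn b2_vup cC (Aint_vdn _ col).
  by case: (Aint (vup c)) => /= /eqP <- /eqP <-; rewrite ?andbF ?andbT.
have hd := oddv_vlf _ col; have hu := oddv_vrt _ col.
rewrite covE_white // /cnt !in_T0 //.
have /eqP p1 := @pairC H Hbig (vlf c) true hd.
have /eqP p2 := @pairC H Hbig (vlf c) false hd.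
have /eqP p3 := @pairC H Hbig (vrt c) true hu.
have /eqP p4 := @pairC H Hbig (vrt c) false hu.
move: p1 p2 p3 p4; rewrite /bx /wy w1_vlf w2_vrt cC (Aint_vlf _ col).
by case: (Aint (vrt c)) => /= /eqP e1 /eqP e2 /eqP e3 /eqP e4; rewrite ?andbF ?andbT ?e1 ?e2 ?e3 ?e4 ?cC.
Qed.

End F.

Lemma hedge_big H : hedgehog H -> forall w, w \in H -> is_big w.
Proof. by case. Qed.

Section DC.
Variable H : {fset pt}.
Hypothesis hH : hedgehog H.
Local Notation Hbig := (hedge_big hH).
Local Notation C := (dom_cells H).
Local Notation Til := (tilings H).

Definition mm T : nat := #|` cls H T|.

Lemma same_refl X : same H X X.
Proof. by apply/allP => c _; rewrite eqxx. Qed.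
Lemma same_sym X Y : same H X Y = same H Y X.
Proof. by apply: eq_in_all => c _; rewrite eq_sym. Qed.
Lemma same_trans X Y Z : same H X Y -> same H Y Z -> same H X Z.
Proof.
move=> /allP h1 /allP h2; apply/allP => c cC.
by rewrite (eqP (h1 c cC)) (eqP (h2 c cC)).
Qed.

Lemma Rel_sym T T' : is_tiling H T -> is_tiling H T' ->
  same H (Tc H T) T' = same H (Tc H T') T.
Proof.
move=> tT tT'; apply: eq_in_all => c cC.
rewrite !(pk_Tc Hbig) //.
by case: (pk T c); case: (pk T' c).
Qed.

Lemma F1 T : is_tiling H T -> (\sum_(T' <- Til) (same H (Tc H T) T' : nat))%N = mm T.
Proof.
move=> tT; rewrite -card_sep.
have tc := Tc_tiling Hbig tT.
rewrite /mm -/(cls H (Tc H T)) (card_cls Hbig tc) (card_cls Hbig tT).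
by rewrite (sinks_Tc Hbig tT) (sinks_sources Hbig tT hH).
Qed.

Lemma mm_pos T : is_tiling H T -> (0 < mm T)%N.
Proof. by move=> tT; rewrite /mm (card_cls Hbig tT) expn_gt0. Qed.

Lemma F3 T T' : is_tiling H T -> is_tiling H T' -> same H (Tc H T) T' -> mm T' = mm T.
Proof.
move=> tT tT' s; rewrite -(F1 tT) /mm /cls card_sep.
apply: eq_big_seq => T'' _; congr nat_of_bool; apply/idP/idP => h.
  exact: same_trans s h.
by apply: same_trans h; apply: same_trans (same_refl _) _; rewrite same_sym.
Qed.

Lemma F4 T T' a : is_tiling H T -> same H (Tc H T) T' -> a \in C -> pk T' a = ~~ pk T a.
Proof.
move=> tT /allP s aC; have := s a aC.
by rewrite (pk_Tc Hbig) // => /eqP <-.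
Qed.

Lemma LR a : a \in C ->
  (\sum_(T <- Til) (pk T a : nat) = \sum_(T <- Til) (~~ pk T a : nat))%N.
Proof.
move=> aC.
set Rl := fun T T' => same H (Tc H T) T'.
have E1 : forall T, T \in Til -> ((pk T a : nat)%:R : rat) =
    \sum_(T' <- Til) (((pk T a && Rl T T') : nat)%:R / (mm T)%:R).
  move=> T; rewrite in_tilings => tT.
  rewrite -mulr_suml -natr_sum.
  case: (pk T a) => /=; last by rewrite big1 ?mul0r.
  rewrite (F1 tT) divff //.
  by rewrite pnatr_eq0 -lt0n mm_pos.
apply/eqP; rewrite -(@eqr_nat rat) !natr_sum; apply/eqP.
rewrite big_seq; under eq_bigr => T TT do rewrite (E1 T TT).
have E2 : forall T, T \in Til ->
   \sum_(T' <- Til) (((pk T a && Rl T T') : nat)%:R / (mm T)%:R) =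
   \sum_(T' <- Til) (((pk T a && Rl T T') : nat)%:R / (mm T')%:R :> rat).
  move=> T TT; rewrite big_seq [RHS]big_seq; apply: eq_bigr => T' TT'.
  case r: (Rl T T'); last by rewrite andbF !mul0r.
  rewrite in_tilings in TT; rewrite in_tilings in TT'.
  by rewrite (F3 TT TT' r).
under eq_bigr => T TT do rewrite (E2 T TT).
rewrite -big_seq exchange_big /=.
rewrite big_seq [RHS]big_seq; apply: eq_bigr => T' TT'.
have tT' : is_tiling H T' by rewrite -in_tilings.
rewrite -mulr_suml -natr_sum.
have -> : (\sum_(T <- Til) ((pk T a && Rl T T') : nat) =
           \sum_(T <- Til) ((~~ pk T' a && Rl T' T) : nat))%N.
  rewrite big_seq [RHS]big_seq; apply: eq_bigr => T TT.
  have tT : is_tiling H T by rewrite -in_tilings.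
  rewrite /Rl (Rel_sym tT tT').
  case r: (same H (Tc H T') T); rewrite ?andbF //.
  by rewrite (F4 tT' r aC).
case: (pk T' a) => /=; first by rewrite big1 ?mul0r.
rewrite (F1 tT') divff //.
by rewrite pnatr_eq0 -lt0n mm_pos.
Qed.

End DC.

Lemma pe_a (a : pt) : (psub a dlam, a) = dom (vlf a) false true.
Proof. by case: a => p q; apply/eqP; rewrite /psub /padd /popp /dlam /dom /bx /wy /b2 /w1 /vlf /= !xpair_eqE; lia. Qed.
Lemma pe_b (a : pt) : (psub a dlamb, a) = dom (vlf a) true true.
Proof. by case: a => p q; apply/eqP; rewrite /psub /padd /popp /dlamb /dom /bx /wy /b1 /w1 /vlf /= !xpair_eqE; lia. Qed.
Lemma pe_c (a : pt) : (padd a dlam, a) = dom (vrt a) true false.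
Proof. by case: a => p q; apply/eqP; rewrite /psub /padd /popp /dlam /dom /bx /wy /b1 /w2 /vrt /= !xpair_eqE; lia. Qed.
Lemma pe_d (a : pt) : (padd a dlamb, a) = dom (vrt a) false false.
Proof. by case: a => p q; apply/eqP; rewrite /psub /padd /popp /dlamb /dom /bx /wy /b2 /w2 /vrt /= !xpair_eqE; lia. Qed.
Lemma pe_e (a : pt) : (a, padd a dlam) = dom (vup a) false true.
Proof. by case: a => p q; apply/eqP; rewrite /psub /padd /popp /dlam /dom /bx /wy /b2 /w1 /vup /= !xpair_eqE; lia. Qed.
Lemma pe_f (a : pt) : (a, psub a dlamb) = dom (vup a) false false.
Proof. by case: a => p q; apply/eqP; rewrite /psub /padd /popp /dlamb /dom /bx /wy /b2 /w2 /vup /= !xpair_eqE; lia. Qed.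
Lemma pe_g (a : pt) : (a, psub a dlam) = dom (vdn a) true false.
Proof. by case: a => p q; apply/eqP; rewrite /psub /padd /popp /dlam /dom /bx /wy /b1 /w2 /vdn /= !xpair_eqE; lia. Qed.
Lemma pe_h (a : pt) : (a, padd a dlamb) = dom (vdn a) true true.
Proof. by case: a => p q; apply/eqP; rewrite /psub /padd /popp /dlamb /dom /bx /wy /b1 /w1 /vdn /= !xpair_eqE; lia. Qed.

Section Fin.
Variable H : {fset pt}.
Hypothesis hH : hedgehog H.
Local Notation Hbig := (hedge_big hH).
Local Notation C := (dom_cells H).
Local Notation Til := (tilings H).

Lemma half_sum (u1 v1 u2 v2 : pt) (b : bool) a : a \in C ->
  (forall T, is_tiling H T -> ((u1, v1) \in T : nat) + ((u2, v2) \in T : nat) = ((pk T a == b) : nat))%N ->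
  dprob H u1 v1 + dprob H u2 v2 = 1 / 2.
Proof.
move=> aC hT.
rewrite /dprob !(@card_sep _ (tilings H)) -mulrDl -natrD -big_split /=.
have -> : (\sum_(i <- Til) (((u1, v1) \in i : nat) + ((u2, v2) \in i : nat)) =
           \sum_(i <- Til) ((pk i a == b) : nat))%N.
  by apply: eq_big_seq => T; rewrite in_tilings => tT; apply: hT.
have hLR := LR hH aC.
have hN : (#|` Til| = \sum_(T <- Til) (pk T a : nat) + \sum_(T <- Til) (~~ pk T a : nat))%N.
  by rewrite card_fset_sum1 -big_split /=; apply: eq_bigr => T _; case: (pk T a).
have T0in : T0 H \in Til by rewrite in_tilings; exact: T0_tiling (hedge_big hH).
have Npos : (0 < #|` Til|)%N by rewrite cardfs_gt0; apply/fset0Pn; exists (T0 H).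
have -> : (\sum_(i <- Til) ((pk i a == b) : nat) = \sum_(T <- Til) (pk T a : nat))%N.
  case: b {hT}; first by apply: eq_bigr => T _; case: (pk T a).
  by rewrite hLR; apply: eq_bigr => T _; case: (pk T a).
rewrite hN -hLR.
move: Npos; rewrite hN -hLR.
move: (\sum_(T <- Til) (pk T a : nat))%N => n n0.
have nz : (n%:R : rat) != 0 by rewrite pnatr_eq0; move: n0; case: n.
rewrite natrD. have -> : (n%:R + n%:R : rat) = n%:R * 2 by rewrite mulr_natr mulr2n. rewrite invfM mulrA divff // mul1r div1r.
Qed.

End Fin.

Unset Implicit Arguments.
Set Strict Implicit.

Theorem corollary4p3 (H : {fset pt}) :
  hedgehog H ->
  (forall a : pt, is_white a -> interior_square H a ->
     dprob H (psub a dlam) a + dprob H (psub a dlamb) a = 1 / 2 /\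
     dprob H (padd a dlam) a + dprob H (padd a dlamb) a = 1 / 2) /\
  (forall a : pt, is_black a -> interior_square H a ->
     dprob H a (padd a dlam) + dprob H a (psub a dlamb) = 1 / 2 /\
     dprob H a (psub a dlam) + dprob H a (padd a dlamb) = 1 / 2).
Proof.
move=> hH; have Hbig := hedge_big hH.
split=> a col /andP[aC _]; split.
- apply: (@half_sum H hH _ _ _ _ true a aC) => T tT.
  rewrite pe_a pe_b /pk /pkc (white_par _ col) /cnt.
  have := @bnd_w H Hbig T tT (vlf a) true (oddv_vlf _ col).
  by case: (dom (vlf a) false true \in T); case: (dom (vlf a) true true \in T).
- apply: (@half_sum H hH _ _ _ _ false a aC) => T tT.
  rewrite pe_c pe_d /pk /pkc (white_par _ col).
  have /eqP := @tiling_cov H Hbig T tT a aC; rewrite covE_white // /cnt.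
  by case: (dom (vlf a) true true \in T); case: (dom (vlf a) false true \in T);
    case: (dom (vrt a) true false \in T); case: (dom (vrt a) false false \in T).
- apply: (@half_sum H hH _ _ _ _ true a aC) => T tT.
  rewrite pe_e pe_f /pk /pkc (black_par _ col) /cnt.
  have := @bnd_b H Hbig T tT (vup a) false (oddv_vup _ col).
  by case: (dom (vup a) false true \in T); case: (dom (vup a) false false \in T).
- apply: (@half_sum H hH _ _ _ _ false a aC) => T tT.
  rewrite pe_g pe_h /pk /pkc (black_par _ col).
  have /eqP := @tiling_cov H Hbig T tT a aC; rewrite covE_black // /cnt.
  by case: (dom (vdn a) true true \in T); case: (dom (vdn a) true false \in T);
    case: (dom (vup a) false true \in T); case: (dom (vup a) false false \in T).
Qed.
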